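(* Let $L$ be a Lie algebra over a field $F$ satisfying an identity \[f(x_0,x_1,\dots,x_{n-1})=[x_0,x_1,\dots,x_{n-1}]+\sum_{1\ne\sigma\in S_{n-1}}\alpha_\sigma[x_0,x_{\sigma(1)},\dots,x_{\sigma(n-1)}]=0,\quad\alpha_\sigma\in F,\] where $n$ is the minimal degree of an identity satisfied by $L$. Let $f_1(x_0,x_2,\dots,x_{n-1})=[x_0,x_2,\dots,x_{n-1}]+\sum_{1\ne\sigma\in S_{n-1},\,\sigma(1)=1}\alpha_\sigma[x_0,x_{\sigma(2)},\dots,x_{\sigma(n-1)}]$. Then for arbitrary elements $a,b_2,\dots,b_{n-1},c\in\tilde L=L\otimes_FE$, \[[f_1(a,b_2,\dots,b_{n-1}),c]\in\sum F[a,b_{i_2},\dots,[b_{i_k},c],\dots,b_{i_{n-1}}],\] where the sum runs over all permutations $i_2,\dots,i_{n-1}$ of $2,\dots,n-1$ and all positions $2\le k\le n-1$.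
   Context: Commutators are left-normed: $[a,b,c,\dots]=[\cdots[[a,b],c],\dots]$. $E$ is the commutative associative $F$-algebra without unit generated by $e_1,e_2,\dots$ with relations $e_i^2=0$, and $\tilde L=L\otimes_FE$ with $[x\otimes\alpha,y\otimes\beta]=[x,y]\otimes\alpha\beta$. *)

(* Defs.v *)
From HB Require Import structures.
From mathcomp Require Import all_boot all_order all_algebra.
From mathcomp Require Import fingroup perm finmap.
Set Implicit Arguments.
Unset Strict Implicit.
Unset Printing Implicit Defensive.
Import Order.TTheory GRing.Theory.
Local Open Scope ring_scope.


Definition is_lie (F : fieldType) (L : lmodType F) (br : L -> L -> L) : Prop :=
  [/\ (forall (a : F) x y z, br (a *: x + y) z = a *: br x z + br y z),
      (forall (a : F) x y z, br x (a *: y + z) = a *: br x y + br x z),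
      (forall x, br x x = 0)
    & (forall x y z, br (br x y) z + br (br y z) x + br (br z x) y = 0)].

Definition lcomm (T : Type) (br : T -> T -> T) (x0 : T) (s : seq T) : T :=
  foldl br x0 s.

Inductive lterm : Type :=
| LVar of nat
| LBr of lterm & lterm.

Fixpoint leval (T : Type) (br : T -> T -> T) (v : nat -> T) (t : lterm) : T :=
  match t with
  | LVar i => v i
  | LBr t1 t2 => br (leval br v t1) (leval br v t2)
  end.

Fixpoint lsize (t : lterm) : nat :=
  match t with
  | LVar _ => 1
  | LBr t1 t2 => lsize t1 + lsize t2
  end.

Definition lpoly (F : fieldType) := seq (F * lterm).

Definition peval (F : fieldType) (L : lmodType F) (br : L -> L -> L)
  (p : lpoly F) (v : nat -> L) : L :=
  \sum_(q <- p) q.1 *: leval br v q.2.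

Definition pdeg (F : fieldType) (p : lpoly F) : nat :=
  \max_(q <- p | q.1 != 0) lsize q.2.

Definition is_identity (F : fieldType) (L : lmodType F) (br : L -> L -> L)
  (p : lpoly F) : Prop :=
  forall v : nat -> L, peval br p v = 0.

(* p is a nonzero Lie polynomial, i.e. not an identity of every Lie algebra
   over F (equivalently: p is nonzero in the free Lie algebra) *)
Definition nontrivial_lpoly (F : fieldType) (p : lpoly F) : Prop :=
  exists (M : lmodType F) (brM : M -> M -> M), is_lie brM /\ ~ is_identity brM p.

Definition no_identity_below (F : fieldType) (L : lmodType F) (br : L -> L -> L)
  (n : nat) : Prop :=
  forall p : lpoly F, (pdeg p < n)%N -> nontrivial_lpoly p -> ~ is_identity br p.

(* E has the F-basis e_S = prod_{i in S} e_i, S a nonempty finite set of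
   indices, with e_S e_T = e_{S u T} if S, T disjoint and 0 otherwise.
   Hence an element of L~ = L (x) E is uniquely sum_S u(S) (x) e_S, i.e. a
   finitely supported function u from finite sets of indices to L with
   u(emptyset) = 0. *)
Definition tilde (L : Type) := {fset nat} -> L.

Definition in_tilde (F : fieldType) (L : lmodType F) (u : tilde L) : Prop :=
  u fset0 = 0 /\ exists s : seq {fset nat}, forall S, S \notin s -> u S = 0.

Definition zeroT (F : fieldType) (L : lmodType F) : tilde L := fun _ => 0.
Definition addT (F : fieldType) (L : lmodType F) (u v : tilde L) : tilde L :=
  fun S => u S + v S.
Definition scaleT (F : fieldType) (L : lmodType F) (a : F) (u : tilde L) : tilde L :=
  fun S => a *: u S.

(* [x (x) e_T, y (x) e_U] = [x,y] (x) e_T e_U, extended bilinearly: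
   the e_S-coefficient of [u,v] is sum over T subset S of [u(T), v(S\T)] *)
Definition brT (F : fieldType) (L : lmodType F) (br : L -> L -> L)
  (u v : tilde L) : tilde L :=
  fun S => \sum_(T <- fpowerset S) br (u T) (v (S `\` T)%fset).

(* Here n = m.+2.  Variables x_1, ..., x_{n-1} are indexed by 'I_(m.+1)
   (ord0 <-> x_1), and S_{n-1} = 'S_(m.+1).
   f(x_0, x_1..x_{n-1}) = sum_sigma alpha_sigma [x_0, x_sigma(1), ..., x_sigma(n-1)]
   (with alpha_1 = 1 assumed separately). *)
Definition fpoly (F : fieldType) (L : lmodType F) (br : L -> L -> L) (m : nat)
  (alpha : 'S_(m.+1) -> F) (x0 : L) (x : 'I_(m.+1) -> L) : L :=
  \sum_(s : 'S_(m.+1)) alpha s *: lcomm br x0 [seq x (s i) | i <- enum 'I_(m.+1)].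

(* extend b : 'I_m -> L~ (the variables x_2..x_{n-1}) to 'I_(m.+1) with a
   dummy value at x_1 (never used below, since sigma(1) = 1) *)
Definition extb (F : fieldType) (L : lmodType F) (m : nat) (b : 'I_m -> tilde L)
  (j : 'I_(m.+1)) : tilde L :=
  if unlift ord0 j is Some i then b i else zeroT L.

Definition f1T (F : fieldType) (L : lmodType F) (br : L -> L -> L) (m : nat)
  (alpha : 'S_(m.+1) -> F) (a : tilde L) (b : 'I_m -> tilde L) : tilde L :=
  \big[@addT F L/zeroT L]_(s : 'S_(m.+1) | s ord0 == ord0)
     scaleT (alpha s)
       (lcomm (brT br) a [seq extb b (s (lift ord0 i)) | i <- enum 'I_m]).

Definition inner_term (F : fieldType) (L : lmodType F) (br : L -> L -> L) (m : nat)
  (a : tilde L) (b : 'I_m -> tilde L) (c : tilde L) (t : 'S_m) (k : 'I_m) : tilde L :=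
  lcomm (brT br) a
    [seq (if i == k then brT br (b (t i)) c else b (t i)) | i <- enum 'I_m].

(* Main.v *)
Require Import Defs.
From HB Require Import structures.
From mathcomp Require Import all_boot all_order all_algebra.
From mathcomp Require Import fingroup perm finmap.
From Stdlib Require Import FunctionalExtensionality.
From mathcomp Require Import zify.
Set Implicit Arguments.
Unset Strict Implicit.
Unset Printing Implicit Defensive.
Import GRing.Theory.
Local Open Scope ring_scope.

Fixpoint parts (k : nat) (S : {fset nat}) : seq (seq {fset nat}) :=
  match k with
  | 0 => [:: [:: S]]
  | k'.+1 => [seq rcons P (S `\` T)%fset | T <- fpowerset S, P <- parts k' T]
  end.

Definition charP (k : nat) (S : {fset nat}) (P : seq {fset nat}) : Prop :=
  size P = k.+1 /\ forall x : nat, count (fun A : {fset nat} => x \in A) P = (x \in S).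

Lemma parts_mem k S P : P \in parts k S <-> charP k S P.
Proof.
elim: k S P => [|k IH] S P /=.
  rewrite inE; split.
    by move/eqP->; split => // x /=; rewrite addn0.
  case=> hs hc; case: P hs hc => [|A [|]] //= _ hc.
  apply/eqP; congr [:: _]; apply/fsetP => x.
  by move: (hc x); rewrite addn0; case: (x \in A); case: (x \in S).
split.
  case/allpairsPdep => T [P0 [hT hP0 ->]].
  move: hT; rewrite fpowersetE => /fsubsetP hT.
  have [hs hc] := (IH _ _).1 hP0.
  split; first by rewrite size_rcons hs.
  move=> x; rewrite -cats1 count_cat /= addn0 hc in_fsetD.
  by case hx: (x \in T); [rewrite (hT _ hx) | case: (x \in S)].
case=> hs hc.
case/lastP: P hs hc => [|P0 X] //; rewrite size_rcons => -[hs] hc.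
have hc' x : count (fun A : {fset nat} => x \in A) P0 + (x \in X) = (x \in S).
  by move: (hc x); rewrite -cats1 count_cat /= addn0.
have XS : (X `<=` S)%fset.
  apply/fsubsetP => x hx; move: (hc' x); rewrite hx.
  by case: (x \in S) => // /eqP; rewrite addn_eq0 andbF.
apply/allpairsPdep; exists (S `\` X)%fset, P0; split.
- by rewrite fpowersetE fsubsetDl.
- apply (IH _ _).2; split => //.
  move=> x; move: (hc' x); rewrite in_fsetD.
  by case: (x \in X); case: (x \in S) => /=; lia.
- by rewrite fsetDK.
Qed.

Lemma parts_uniq k S : uniq (parts k S).
Proof.
elim: k S => [|k IH] S //=.
apply: allpairs_uniq_dep; first exact: fset_uniq.
  by move=> T _; exact: IH.
move=> [T1 P1] [T2 P2] /allpairsPdep [T1' [Q1 [h1 hq1 [e1 e1']]]]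
  /allpairsPdep [T2' [Q2 [h2 hq2 [e2 e2']]]] /=.
subst T1' T2'.
move=> /eqP; rewrite eqseq_rcons => /andP [/eqP eP /eqP eT].
have E : T1 = T2.
  move: h1 h2; rewrite !fpowersetE => h1 h2.
  by rewrite -(fsetDK h1) eT (fsetDK h2).
by subst T2; rewrite eP.
Qed.

Definition reord (idx : seq nat) (P : seq {fset nat}) : seq {fset nat} :=
  [seq nth fset0 P j | j <- idx].

Lemma reord_char k S P idx : perm_eq idx (iota 0 k.+1) -> charP k S P ->
  charP k S (reord idx P).
Proof.
move=> pi [hs hc].
have pe : perm_eq (reord idx P) P.
  by rewrite -{2}(mkseq_nth fset0 P) /mkseq hs /reord perm_map.
split; first by rewrite (perm_size pe).
by move=> x; rewrite -hc; move/seq.permP: pe; apply.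
Qed.

Lemma reord_inj k S idx : perm_eq idx (iota 0 k.+1) ->
  {in parts k S &, injective (reord idx)}.
Proof.
move=> pi P Q /parts_mem [hP _] /parts_mem [hQ _] /eq_in_map e.
apply: (@eq_from_nth _ fset0); first by rewrite hP hQ.
move=> j; rewrite hP => hj; apply: e.
by rewrite (perm_mem pi) mem_iota.
Qed.

Lemma parts_reord k S idx : perm_eq idx (iota 0 k.+1) ->
  perm_eq (map (reord idx) (parts k S)) (parts k S).
Proof.
move=> pi; have U1 : uniq (map (reord idx) (parts k S)).
  by rewrite (map_inj_in_uniq (@reord_inj k S idx pi)) parts_uniq.
apply: uniq_perm => //; first exact: parts_uniq.
have SUB : {subset map (reord idx) (parts k S) <= parts k S}.
  move=> Q /mapP [P hP ->]; apply/parts_mem; apply: reord_char => //.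
  exact/parts_mem.
have LE : (size (parts k S) <= size (map (reord idx) (parts k S)))%N by rewrite size_map.
by have [_ E] := uniq_min_size U1 SUB LE.
Qed.

Lemma sum_reord (V : nmodType) k S idx (h : seq {fset nat} -> V) :
  perm_eq idx (iota 0 k.+1) ->
  \sum_(P <- parts k S) h P = \sum_(P <- parts k S) h (reord idx P).
Proof.
move=> pi; rewrite -(big_map (reord idx) xpredT h).
by apply: perm_big; rewrite perm_sym parts_reord.
Qed.

Lemma parts_size k S P : P \in parts k S -> size P = k.+1.
Proof. by case/parts_mem. Qed.

Section Lie.
Variables (F : fieldType) (L : lmodType F) (br : L -> L -> L).
Hypothesis Hl : is_lie br.

Lemma brDl x y z : br (x + y) z = br x z + br y z.
Proof. by case: Hl => h _ _ _; have := h 1 x y z; rewrite !scale1r. Qed.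
Lemma brDr x y z : br x (y + z) = br x y + br x z.
Proof. by case: Hl => _ h _ _; have := h 1 x y z; rewrite !scale1r. Qed.
Lemma br0l z : br 0 z = 0.
Proof. by apply: (addIr (br 0 z)); rewrite add0r -brDl addr0. Qed.
Lemma br0r z : br z 0 = 0.
Proof. by apply: (addIr (br z 0)); rewrite add0r -brDr addr0. Qed.
Lemma brZl a x z : br (a *: x) z = a *: br x z.
Proof. by case: Hl => h _ _ _; have := h a x 0 z; rewrite !addr0 br0l addr0. Qed.
Lemma brZr a x z : br z (a *: x) = a *: br z x.
Proof. by case: Hl => _ h _ _; have := h a z x 0; rewrite !addr0 br0r addr0. Qed.
Lemma br_anti x y : br x y = - br y x.
Proof.
case: Hl => _ _ h _; have := h (x + y).
rewrite brDl !brDr !h add0r addr0 => /eqP; rewrite addr_eq0 => /eqP //.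
Qed.
Lemma br_jac x y z : br (br x y) z + br (br y z) x + br (br z x) y = 0.
Proof. by case: Hl. Qed.

Lemma br_suml I (r : seq I) (P : pred I) (G : I -> L) z :
  br (\sum_(i <- r | P i) G i) z = \sum_(i <- r | P i) br (G i) z.
Proof. exact: (big_morph (fun u => br u z) (fun u v => brDl u v z) (br0l z)). Qed.

Definition vals (xs : seq (tilde L)) (P : seq {fset nat}) : seq L :=
  [seq q.1 q.2 | q <- zip xs P].
Definition lc (l : seq L) : L := lcomm br (head 0 l) (behead l).

Lemma expand x0 xs S :
  lcomm (brT br) x0 xs S = \sum_(P <- parts (size xs) S) lc (vals (x0 :: xs) P).
Proof.
elim/last_ind: xs S => [|xs y IH] S; first by rewrite /= big_seq1.
rewrite /lcomm foldl_rcons -/(lcomm _ _ _) /brT size_rcons /= big_allpairs_dep.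
apply: eq_bigr => T _; rewrite IH br_suml big_seq [RHS]big_seq.
apply: eq_bigr => P hP; have := parts_size hP.
case: P hP => [|p0 P] //= _ [hs].
rewrite /vals /= zip_rcons // map_rcons /lc /= /lcomm foldl_rcons //.
Qed.

Definition lcT (l : seq (tilde L)) : tilde L :=
  lcomm (brT br) (head (zeroT L) l) (behead l).

Lemma expandT (l : seq (tilde L)) S : (0 < size l)%N ->
  lcT l S = \sum_(P <- parts (size l).-1 S) lc (vals l P).
Proof. by case: l => // x0 xs _; rewrite /lcT expand. Qed.

Lemma transfer (I : Type) (r : seq I) (coef : I -> F) (idx : I -> seq nat) k
    (v : seq (tilde L)) :
  (forall i, perm_eq (idx i) (iota 0 k.+1)) ->
  (forall w : seq L, \sum_(i <- r) coef i *: lc [seq nth 0 w j | j <- idx i] = 0) ->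
  forall S, \sum_(i <- r) coef i *: lcT [seq nth (zeroT L) v j | j <- idx i] S = 0.
Proof.
move=> hp hw S.
pose wP (P : seq {fset nat}) :=
  [seq nth (zeroT L) v j (nth fset0 P j) | j <- iota 0 k.+1].
have step i : lcT [seq nth (zeroT L) v j | j <- idx i] S =
    \sum_(P <- parts k S) lc [seq nth 0 (wP P) j | j <- idx i].
  have hs : size (idx i) = k.+1 by rewrite (perm_size (hp i)) size_iota.
  rewrite expandT; last by rewrite size_map hs.
  rewrite size_map hs /= (sum_reord _ _ (hp i)).
  apply: eq_bigr => P _; congr lc.
  rewrite /vals /reord zip_map -map_comp; apply/eq_in_map => j hj /=.
  have hjk : (j < k.+1)%N by move: hj; rewrite (perm_mem (hp i)) mem_iota.
  by rewrite /wP (nth_map 0) ?size_iota // nth_iota.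
under eq_bigr => i _ do rewrite step scaler_sumr.
by rewrite exchange_big /= big1 // => P _.
Qed.

Lemma brNl x z : br (- x) z = - br x z.
Proof. by rewrite -scaleN1r brZl scaleN1r. Qed.

Lemma transfer2 (r : seq (F * seq nat)) k (v : seq (tilde L)) :
  all (fun q => perm_eq q.2 (iota 0 k.+1)) r ->
  (forall w : seq L, \sum_(q <- r) q.1 *: lc [seq nth 0 w j | j <- q.2] = 0) ->
  forall S, \sum_(q <- r) q.1 *: lcT [seq nth (zeroT L) v j | j <- q.2] S = 0.
Proof.
move=> /allP hp hw S.
pose idx q := if q \in r then q.2 else iota 0 k.+1.
have -> : \sum_(q <- r) q.1 *: lcT [seq nth (zeroT L) v j | j <- q.2] S =
   \sum_(q <- r) q.1 *: lcT [seq nth (zeroT L) v j | j <- idx q] S.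
  by rewrite big_seq [RHS]big_seq; apply: eq_bigr => q hq; rewrite /idx hq.
apply: (@transfer _ r (fun q => q.1) idx k v).
  by move=> q; rewrite /idx; case: ifP => [/hp //|_]; exact: perm_refl.
move=> w; rewrite -[RHS](hw w) big_seq [RHS]big_seq.
by apply: eq_bigr => q hq; rewrite /idx hq.
Qed.

Lemma brT_anti u v : brT br u v = scaleT (-1) (brT br v u).
Proof.
apply: functional_extensionality => S.
rewrite /scaleT scaleN1r; apply/eqP; rewrite -addr_eq0; apply/eqP.
have -> : brT br u v S + brT br v u S = \sum_(q <- [:: (1, [:: 0; 1]); (1, [:: 1; 0])])
   q.1 *: lcT [seq nth (zeroT L) [:: u; v] j | j <- q.2] S.
  by rewrite !big_cons big_nil /= !scale1r addr0.
apply: (@transfer2 _ 1) => // w.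
rewrite !big_cons big_nil /= !scale1r addr0 /lc /=.
by rewrite br_anti addNr.
Qed.

Lemma brT_jac z X x : brT br z (brT br X x) =
  addT (brT br (brT br z X) x) (scaleT (-1) (brT br (brT br z x) X)).
Proof.
apply: functional_extensionality => S.
have A := congr1 (fun f => f S) (brT_anti z (brT br X x)).
rewrite /= /scaleT scaleN1r in A; rewrite A /addT /scaleT scaleN1r.
have J : brT br (brT br z X) x S + (- brT br (brT br z x) X S + brT br (brT br X x) z S) = 0.
  have -> : brT br (brT br z X) x S + (- brT br (brT br z x) X S + brT br (brT br X x) z S) =
    \sum_(q <- [:: (1, [:: 0; 1; 2]); (-1, [:: 0; 2; 1]); (1, [:: 1; 2; 0])])
      q.1 *: lcT [seq nth (zeroT L) [:: z; X; x] j | j <- q.2] S.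
    by rewrite !big_cons big_nil /= !scale1r scaleN1r addr0.
  apply: (@transfer2 _ 2) => // w.
  rewrite !big_cons big_nil /= !scale1r scaleN1r addr0 /lc /=.
  set a := w`_0; set b := w`_1; set c := w`_2.
  have := br_jac b c a; rewrite (br_anti c a) brNl => <-.
  by rewrite [RHS]addrC (addrC (- _)).
apply/eqP; rewrite eq_sym -subr_eq0 opprK; apply/eqP; rewrite -J.
by rewrite addrA.
Qed.

Lemma perm_map_enum n (s : 'S_n) : perm_eq [seq s i | i <- enum 'I_n] (enum 'I_n).
Proof.
apply: uniq_perm; first by rewrite map_inj_uniq ?enum_uniq //; exact: perm_inj.
  exact: enum_uniq.
move=> x; rewrite mem_enum; apply/mapP; exists ((s^-1)%g x); first by rewrite mem_enum.
by rewrite permKV.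
Qed.

Lemma fT (m : nat) (alpha : 'S_(m.+1) -> F) :
  (forall x0 x, fpoly br alpha x0 x = 0) ->
  forall (x0 : tilde L) (x : 'I_(m.+1) -> tilde L) S,
  \sum_(s : 'S_(m.+1)) alpha s *: lcomm (brT br) x0 [seq x (s i) | i <- enum 'I_(m.+1)] S = 0.
Proof.
move=> hf x0 x S.
pose idx (s : 'S_(m.+1)) := 0%N :: [seq (s i).+1 | i <- enum 'I_(m.+1)].
pose v := x0 :: [seq x i | i <- enum 'I_(m.+1)].
have E (s : 'S_(m.+1)) : lcomm (brT br) x0 [seq x (s i) | i <- enum 'I_(m.+1)] =
    lcT [seq nth (zeroT L) v j | j <- idx s].
  rewrite /lcT /= -map_comp; congr lcomm; apply: eq_map => i /=.
  by rewrite (nth_map ord0) ?size_enum_ord ?ltn_ord // nth_ord_enum.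
under eq_bigr => s _ do rewrite E.
apply: (@transfer _ _ alpha idx m.+1 v).
  move=> s; rewrite /idx -[iota 0 _]/(0%N :: iota 1 m.+1) perm_cons.
  rewrite -[1%N]/(1 + 0)%N iotaDl.
  have -> : [seq (s i).+1 | i <- enum 'I_(m.+1)] =
    [seq (1 + nat_of_ord i)%N | i <- [seq s i | i <- enum 'I_(m.+1)]].
    by elim: (enum 'I_(m.+1)) => //= ? ? ->.
  have -> : [seq (1 + i)%N | i <- iota 0 m.+1] = [seq (1 + nat_of_ord i)%N | i <- enum 'I_(m.+1)].
    by rewrite -val_enum_ord -map_comp.
  exact: perm_map (perm_map_enum s).
move=> w; have := hf (nth 0 w 0) (fun i => nth 0 w i.+1).
by rewrite /fpoly /idx /lc /=; under eq_bigr => s _ do rewrite -map_comp.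
Qed.

End Lie.

Section Tl.
Variables (F : fieldType) (L : lmodType F) (br : L -> L -> L).
Hypothesis Hl : is_lie br.

Local Notation brT := (brT br).
Local Notation lcT := (lcomm brT).

Lemma brTDl u v w : brT (addT u v) w = addT (brT u w) (brT v w).
Proof.
apply: functional_extensionality => S; rewrite /brT /addT -big_split /=.
by apply: eq_bigr => T _; rewrite (brDl Hl).
Qed.
Lemma brTZl a u w : brT (scaleT a u) w = scaleT a (brT u w).
Proof.
apply: functional_extensionality => S; rewrite /brT /scaleT scaler_sumr.
by apply: eq_bigr => T _; rewrite (brZl Hl).
Qed.
Lemma brT0l w : brT (zeroT L) w = zeroT L.
Proof.
apply: functional_extensionality => S; rewrite /brT /zeroT big1 // => T _.
exact: (br0l Hl).
Qed.
Lemma brTDr u v w : brT w (addT u v) = addT (brT w u) (brT w v).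
Proof.
apply: functional_extensionality => S; rewrite /brT /addT -big_split /=.
by apply: eq_bigr => T _; rewrite (brDr Hl).
Qed.
Lemma brTZr a u w : brT w (scaleT a u) = scaleT a (brT w u).
Proof.
apply: functional_extensionality => S; rewrite /brT /scaleT scaler_sumr.
by apply: eq_bigr => T _; rewrite (brZr Hl).
Qed.

Lemma lcommD z1 z2 w : lcT (addT z1 z2) w = addT (lcT z1 w) (lcT z2 w).
Proof. by elim: w z1 z2 => //= x w IH z1 z2; rewrite brTDl IH. Qed.
Lemma lcommZ a z w : lcT (scaleT a z) w = scaleT a (lcT z w).
Proof. by elim: w z => //= x w IH z; rewrite brTZl IH. Qed.
Lemma lcomm0 w : lcT (zeroT L) w = zeroT L.
Proof. by elim: w => //= x w IH; rewrite brT0l IH. Qed.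
Lemma lcomm_rcons z w x : lcT z (rcons w x) = brT (lcT z w) x.
Proof. by rewrite /lcomm foldl_rcons. Qed.
Lemma lcomm_cat z w1 w2 : lcT z (w1 ++ w2) = lcT (lcT z w1) w2.
Proof. by rewrite /lcomm foldl_cat. Qed.

Inductive span (G : tilde L -> Prop) : tilde L -> Prop :=
| span0 : span G (zeroT L)
| spanG x : G x -> span G x
| spanD x y : span G x -> span G y -> span G (addT x y)
| spanZ a x : span G x -> span G (scaleT a x).

Lemma span_map (phi : tilde L -> tilde L) (G G' : tilde L -> Prop) :
  phi (zeroT L) = zeroT L ->
  (forall x y, phi (addT x y) = addT (phi x) (phi y)) ->
  (forall a x, phi (scaleT a x) = scaleT a (phi x)) ->
  (forall x, G x -> span G' (phi x)) ->
  forall x, span G x -> span G' (phi x).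
Proof.
move=> h0 hD hZ hG x; elim => [|y /hG //|y z _ Hy _ Hz|a y _ Hy].
- by rewrite h0; exact: span0.
- by rewrite hD; exact: spanD.
- by rewrite hZ; exact: spanZ.
Qed.

Lemma span_sub (G G' : tilde L -> Prop) :
  (forall x, G x -> G' x) -> forall x, span G x -> span G' x.
Proof.
move=> h; apply: (@span_map id) => // y /h; exact: spanG.
Qed.

Variables (m : nat) (b : 'I_m -> tilde L) (c : tilde L).

Fixpoint mods (u : seq 'I_m) (k : nat) : seq (tilde L) :=
  match u with
  | [::] => [::]
  | x :: u' => if k is k'.+1 then b x :: mods u' k' else brT (b x) c :: map b u'
  end.

Lemma mods_rcons_lt u x k : (k < size u)%N -> mods (rcons u x) k = rcons (mods u k) (b x).
Proof. by elim: u k => [|y u IH] [|k] //= hk; rewrite ?map_rcons ?IH. Qed.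

Lemma mods_rcons_last u x : mods (rcons u x) (size u) = rcons (map b u) (brT (b x) c).
Proof. by elim: u => [|y u IH] //=; rewrite IH. Qed.

Lemma mods_cat u1 u2 k : (k < size u1)%N -> mods (u1 ++ u2) k = mods u1 k ++ map b u2.
Proof. by elim: u1 k => [|y u IH] [|k] //= hk; rewrite ?map_cat ?IH. Qed.

Definition Gen (z : tilde L) (u : seq 'I_m) (y : tilde L) : Prop :=
  exists u' k, [/\ perm_eq u' u, (k < size u')%N & y = lcT z (mods u' k)].

Lemma Gen_perm z u v y : perm_eq u v -> Gen z u y -> Gen z v y.
Proof.
by move=> huv [u' [k [h1 h2 ->]]]; exists u', k; split => //; exact: perm_trans huv.
Qed.

Lemma span_br_right (z : tilde L) u x y : span (Gen z u) y ->
  span (Gen z (rcons u x)) (brT y (b x)).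
Proof.
apply: (@span_map (fun y => brT y (b x))).
- exact: brT0l.
- by move=> ? ?; rewrite brTDl.
- by move=> ? ?; rewrite brTZl.
move=> y' [u' [k [hp hk ->]]]; apply: spanG.
exists (rcons u' x), k; split.
- by rewrite -!cats1 perm_cat2r.
- by rewrite size_rcons ltnS ltnW.
- by rewrite mods_rcons_lt // lcomm_rcons.
Qed.

Lemma K u z : (0 < size u)%N -> span (Gen z u) (brT z (lcT c (map b u))).
Proof.
elim/last_ind: u z => [|u0 x IH] z // _.
rewrite map_rcons lcomm_rcons.
have [u0nil | u0ne] : u0 = [::] \/ (0 < size u0)%N.
  by case: u0 {IH} => [|? ?]; [left|right].
  subst u0; rewrite /= (brT_anti Hl c) brTZr; apply: spanZ; apply: spanG.
  by exists [:: x], 0%N; split.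
rewrite (brT_jac Hl); apply: spanD; first exact/span_br_right/IH.
apply: spanZ.
apply: (@span_sub (Gen (brT z (b x)) u0)); last exact: IH.
move=> y [u' [k [hp hk ->]]]; exists (x :: u'), k.+1; split => //.
by rewrite perm_sym perm_rcons perm_cons perm_sym.
Qed.

Lemma Deriv u z : span (Gen z u)
  (addT (brT (lcT z (map b u)) c) (scaleT (-1) (lcT (brT z c) (map b u)))).
Proof.
elim/last_ind: u z => [|u0 x IH] z.
  have -> : addT (brT (lcT z (map b [::])) c) (scaleT (-1) (lcT (brT z c) (map b [::])))
     = zeroT L.
    by apply: functional_extensionality => S; rewrite /addT /scaleT /= scaleN1r addrN.
  exact: span0.
set A := lcT z (map b u0); set Y := lcT (brT z c) (map b u0).
set D0 := addT (brT A c) (scaleT (-1) Y).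
have E : addT (brT (lcT z (map b (rcons u0 x))) c)
   (scaleT (-1) (lcT (brT z c) (map b (rcons u0 x)))) =
   addT (brT A (brT (b x) c)) (brT D0 (b x)).
  rewrite !map_rcons !lcomm_rcons -/A -/Y /D0 brTDl brTZl (brT_jac Hl).
  apply: functional_extensionality => S; rewrite /addT /scaleT !scaleN1r.
  by rewrite addrA subrK.
rewrite E; apply: spanD; last exact: span_br_right.
apply: spanG; exists (rcons u0 x), (size u0); split => //.
- by rewrite size_rcons.
- by rewrite mods_rcons_last lcomm_rcons.
Qed.

Lemma Mlem u1 u2 a : (0 < size u1)%N ->
  span (Gen a (u1 ++ u2)) (lcT c (map b u1 ++ a :: map b u2)).
Proof.
move=> hu; rewrite lcomm_cat /= (brT_anti Hl) lcommZ; apply: spanZ.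
apply: (@span_map (fun y => lcT y (map b u2)) (Gen a u1)).
- exact: lcomm0.
- by move=> ? ?; rewrite lcommD.
- by move=> ? ?; rewrite lcommZ.
- move=> y [u' [k [hp hk ->]]]; apply: spanG; exists (u' ++ u2), k; split.
  + by rewrite perm_cat2r.
  + by rewrite size_cat (leq_trans hk) ?leq_addr.
  + by rewrite mods_cat // lcomm_cat.
exact: K.
Qed.
End Tl.

Section Fin.
Variables (F : fieldType) (L : lmodType F) (br : L -> L -> L).
Hypothesis Hl : is_lie br.
Variables (m : nat) (a : tilde L) (b : 'I_m -> tilde L) (c : tilde L).

Definition FS (x : tilde L) : Prop :=
  exists gamma : 'S_m -> 'I_m -> F, forall S,
    x S = \sum_(t : 'S_m) \sum_(k : 'I_m) gamma t k *: inner_term br a b c t k S.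

Lemma FS_ext x y : (forall S, x S = y S) -> FS y -> FS x.
Proof. by move=> e [g hg]; exists g => S; rewrite e hg. Qed.

Lemma FS0 : FS (zeroT L).
Proof.
exists (fun _ _ => 0) => S; rewrite /zeroT big1 // => t _.
by rewrite big1 // => k _; rewrite scale0r.
Qed.

Lemma FS_add x y : FS x -> FS y -> FS (addT x y).
Proof.
move=> [g1 h1] [g2 h2]; exists (fun t k => g1 t k + g2 t k) => S.
rewrite /addT h1 h2 -big_split; apply: eq_bigr => t _.
by rewrite -big_split; apply: eq_bigr => k _; rewrite scalerDl.
Qed.

Lemma FS_scale e x : FS x -> FS (scaleT e x).
Proof.
move=> [g h]; exists (fun t k => e * g t k) => S.
rewrite /scaleT h scaler_sumr; apply: eq_bigr => t _.
by rewrite scaler_sumr; apply: eq_bigr => k _; rewrite scalerA.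
Qed.

Lemma FS_sum (I : Type) (r : seq I) (P : pred I) (coef : I -> F) (g : I -> tilde L) :
  (forall i, P i -> FS (g i)) ->
  FS (fun S => \sum_(i <- r | P i) coef i *: g i S).
Proof.
move=> hg; elim: r => [|i r IH].
  by apply: (FS_ext _ FS0) => S; rewrite big_nil.
case hP: (P i).
  apply: (FS_ext _ (FS_add (FS_scale (coef i) (hg i hP)) IH)) => S.
  by rewrite big_cons hP.
by apply: (FS_ext _ IH) => S; rewrite big_cons hP.
Qed.

Lemma mods_aux (u : seq 'I_m) d e : (e < d)%N ->
  [seq (if p.1 == e then brT br (b p.2) c else b p.2) | p <- zip (iota d (size u)) u]
  = map b u.
Proof.
elim: u d => //= x u IH d he.
by rewrite (gtn_eqF he) IH // ltnW.
Qed.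

Lemma mods_zip (u : seq 'I_m) k d :
  [seq (if p.1 == (k + d)%N then brT br (b p.2) c else b p.2) | p <- zip (iota d (size u)) u]
  = mods br b c u k.
Proof.
elim: u k d => [|x u IH] [|k] d //=.
  by rewrite add0n eqxx mods_aux.
have -> : (d == k.+1 + d)%N = false by rewrite -{1}(add0n d) eqn_add2r.
by rewrite addSnnS IH.
Qed.

Lemma FS_gen y : Gen br b c a (enum 'I_m) y -> FS y.
Proof.
move=> [u' [k [hp hk ->]]].
have hsz : size u' == m by rewrite (perm_size hp) size_enum_ord.
pose tu := Tuple hsz.
have hU : uniq u' by rewrite (perm_uniq hp) enum_uniq.
have inj : injective (tnth tu).
  move=> i j; rewrite (tnth_nth i) (tnth_nth i) /= => /eqP.
  by rewrite nth_uniq ?(eqP hsz) // => /eqP /val_inj.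
pose t := perm inj.
have ht : [seq t i | i <- enum 'I_m] = u'.
  have := map_tnth_enum tu; rewrite /= => <-; apply: eq_map => i.
  by rewrite permE.
have hkm : (k < m)%N by rewrite -(eqP hsz).
pose k' := Ordinal hkm.
exists (fun t0 k0 => ((t0 == t) && (k0 == k'))%:R) => S.
rewrite (bigD1 t) //= [X in _ + X]big1 ?addr0; last first.
  by move=> t0 /negbTE ->; apply: big1 => k0 _; rewrite /= scale0r.
rewrite (bigD1 k') //= [X in _ + X]big1 ?addr0; last first.
  by move=> k0 /negbTE ->; rewrite andbF scale0r.
rewrite !eqxx scale1r /inner_term -ht -(mods_zip _ _ 0) addn0 size_map size_enum_ord.
rewrite -val_enum_ord zip_map.
apply: (congr1 (fun l => lcomm (brT br) a l S)).
by elim: (enum 'I_m) => //= i l ->.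
Qed.

Lemma span_FS y : span (Gen br b c a (enum 'I_m)) y -> FS y.
Proof.
elim => [|x /FS_gen //|x z _ hx _ hz|e x _ hx].
- exact: FS0.
- exact: FS_add.
- exact: FS_scale.
Qed.
End Fin.

Section Main.
Variables (F : fieldType) (L : lmodType F) (br : L -> L -> L).
Hypothesis Hl : is_lie br.
Variables (m : nat) (a : tilde L) (b : 'I_m -> tilde L) (c : tilde L).

Definition yv (j : 'I_(m.+1)) : tilde L :=
  if unlift ord0 j is Some i then b i else a.

Lemma map_unlift (g : 'I_(m.+1) -> tilde L) (l : seq 'I_(m.+1)) :
  (forall j i, unlift ord0 j = Some i -> g j = b i) -> ord0 \notin l ->
  map g l = map b (pmap (unlift ord0) l).
Proof.
move=> hg; elim: l => //= j l IH; rewrite in_cons negb_or => /andP [hj hl].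
have hj' : ord0 != j by [].
case: (unlift_some hj') => i _ hu; rewrite hu /= (hg j i hu) IH //.
Qed.

Lemma us_perm (s : 'S_(m.+1)) :
  perm_eq (pmap (unlift ord0) [seq s i | i <- enum 'I_(m.+1)]) (enum 'I_m).
Proof.
have -> : enum 'I_m = pmap (unlift ord0) (enum 'I_(m.+1)).
  by rewrite enum_ordSl /= unlift_none (map_pK (@liftK _ ord0)).
exact: perm_pmap (perm_map_enum s).
Qed.

Lemma ws_eq (g : 'I_(m.+1) -> tilde L) (s : 'S_(m.+1)) :
  (forall j i, unlift ord0 j = Some i -> g j = b i) -> s ord0 == ord0 ->
  [seq g (s (lift ord0 i)) | i <- enum 'I_m] =
  map b (pmap (unlift ord0) [seq s i | i <- enum 'I_(m.+1)]).
Proof.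
move=> hg /eqP h0; rewrite enum_ordSl /= h0 unlift_none.
have -> : [seq g (s (lift ord0 i)) | i <- enum 'I_m] =
   [seq g j | j <- [seq s i | i <- map (lift ord0) (enum 'I_m)]].
  by elim: (enum 'I_m) => //= ? ? ->.
apply: map_unlift => //; apply/mapP => -[j /mapP [i _ ->]].
by rewrite -{1}h0 => /perm_inj /eqP; rewrite (negbTE (neq_lift _ _)).
Qed.

Lemma split_s (s : 'S_(m.+1)) : s ord0 != ord0 ->
  exists u1 u2, [/\ (0 < size u1)%N, perm_eq (u1 ++ u2) (enum 'I_m) &
    [seq yv (s i) | i <- enum 'I_(m.+1)] = map b u1 ++ a :: map b u2].
Proof.
move=> hs0.
have hyv : forall j i, unlift ord0 j = Some i -> yv j = b i by move=> j i; rewrite /yv => ->.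
have hjs : perm_eq [seq s i | i <- enum 'I_(m.+1)] (enum 'I_(m.+1)) := perm_map_enum s.
move: hjs; set js := [seq s i | i <- enum 'I_(m.+1)] => hjs.
have hU : uniq js by rewrite (perm_uniq hjs) enum_uniq.
have h0 : ord0 \in js by rewrite (perm_mem hjs) mem_enum.
have hp : (index ord0 js < size js)%N by rewrite index_mem.
have E : js = take (index ord0 js) js ++ ord0 :: drop (index ord0 js).+1 js.
  by rewrite -{1}(cat_take_drop (index ord0 js) js) (drop_nth ord0 hp) nth_index.
have hjs0 : js = s ord0 :: [seq s i | i <- map (lift ord0) (enum 'I_m)].
  by rewrite /js enum_ordSl.
move: E; set t := take _ js; set d := drop _ js => E.
have [ht hd] : ord0 \notin t /\ ord0 \notin d.
  move: hU; rewrite E cat_uniq /= => /and3P [_ hh /andP [hd _]]; split => //.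
  by move: hh; apply: contra => h; rewrite h.
exists (pmap (unlift ord0) t), (pmap (unlift ord0) d); split.
- rewrite /t hjs0 /= (negbTE hs0) /=.
  have hs0' : ord0 != s ord0 by rewrite eq_sym.
  by case: (unlift_some hs0') => i _ ->.
- rewrite -pmap_cat.
  have -> : pmap (unlift ord0) (t ++ d) = pmap (unlift ord0) js.
    by rewrite [in RHS]E !pmap_cat /= unlift_none.
  exact: us_perm.
- have -> : [seq yv (s i) | i <- enum 'I_(m.+1)] = map yv js by rewrite /js; elim: (enum 'I_(m.+1)) => //= ? ? ->.
  rewrite E map_cat /= (map_unlift hyv ht) (map_unlift hyv hd).
  by rewrite /yv unlift_none.
Qed.
End Main.

Theorem lemma27 (F : fieldType) (L : lmodType F) (br : L -> L -> L) (m : nat)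
  (alpha : 'S_(m.+1) -> F) :
  is_lie br ->
  alpha 1%g = 1 ->
  (forall (x0 : L) (x : 'I_(m.+1) -> L), fpoly br alpha x0 x = 0) ->
  no_identity_below br m.+2 ->
  forall (a : tilde L) (b : 'I_m -> tilde L) (c : tilde L),
    in_tilde a -> (forall i, in_tilde (b i)) -> in_tilde c ->
    exists gamma : 'S_m -> 'I_m -> F,
      forall S : {fset nat},
        brT br (f1T br alpha a b) c S =
        \sum_(t : 'S_m) \sum_(k : 'I_m) gamma t k *: inner_term br a b c t k S.
Proof.
move=> Hl _ hf _ a b c _ _ _.
pose us (s : 'S_(m.+1)) := pmap (unlift ord0) [seq s i | i <- enum 'I_(m.+1)].
pose Lc s := lcomm (brT br) (brT br a c) (map b (us s)).
pose D s := addT (brT br (lcomm (brT br) a (map b (us s))) c) (scaleT (-1) (Lc s)).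
have hext : forall j i, unlift ord0 j = Some i -> extb b j = b i.
  by move=> j i; rewrite /extb => ->.
have hyv : forall j i, unlift ord0 j = Some i -> yv a b j = b i.
  by move=> j i; rewrite /yv => ->.
suff : FS br a b c (brT br (f1T br alpha a b) c) by case=> g hg; exists g.
have key : forall S, brT br (f1T br alpha a b) c S =
   \sum_(s : 'S_(m.+1) | s ord0 != ord0) alpha s *:
      lcomm (brT br) c [seq yv a b (s i) | i <- enum 'I_(m.+1)] S +
   \sum_(s : 'S_(m.+1) | s ord0 == ord0) alpha s *: D s S.
  move=> S.
  have hid := fT Hl hf c (yv a b) S.
  rewrite (bigID (fun s : 'S_(m.+1) => s ord0 == ord0)) /= in hid.
  have ya : yv a b ord0 = a by rewrite /yv unlift_none.
  have e1 : \sum_(s : 'S_(m.+1) | s ord0 == ord0) alpha s *: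
      lcomm (brT br) c [seq yv a b (s i) | i <- enum 'I_(m.+1)] S =
      - \sum_(s : 'S_(m.+1) | s ord0 == ord0) alpha s *: Lc s S.
    rewrite -sumrN; apply: eq_bigr => s hs.
    rewrite enum_ordSl /= (eqP hs) ya (brT_anti Hl c a) (lcommZ Hl).
    rewrite /scaleT scaleN1r scalerN; congr (- (_ *: _)).
    rewrite /Lc /us -(ws_eq hyv hs).
    by apply: (congr1 (fun l => lcomm (brT br) (brT br a c) l S));
      elim: (enum 'I_m) => //= ? ? ->.
  rewrite e1 in hid.
  move/eqP: hid; rewrite addrC subr_eq0 => /eqP hY.
  have bm : forall (r : seq 'S_(m.+1)) (P : pred 'S_(m.+1)) (G : 'S_(m.+1) -> tilde L),
      brT br (\big[@addT F L/zeroT L]_(i <- r | P i) G i) c =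
      \big[@addT F L/zeroT L]_(i <- r | P i) brT br (G i) c.
    by move=> r P G; apply: (big_morph (fun u => brT br u c) (fun u v => brTDl Hl u v c) (brT0l Hl c)).
  have ev : forall (r : seq 'S_(m.+1)) (P : pred 'S_(m.+1)) (G : 'S_(m.+1) -> tilde L),
      (\big[@addT F L/zeroT L]_(i <- r | P i) G i) S = \sum_(i <- r | P i) G i S.
    move=> r P G; elim: r => [|i r IH]; first by rewrite !big_nil.
    by rewrite !big_cons; case: (P i) => //; rewrite -IH.
  rewrite /f1T bm ev hY.
  rewrite -big_split; apply: eq_bigr => s hs.
  rewrite (brTZl Hl) /scaleT (ws_eq hext hs) -[RHS]/(alpha s *: Lc s S + alpha s *: D s S) -scalerDr; congr (_ *: _).
  by rewrite /D /addT /scaleT scaleN1r addrC subrK.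
have F1 : FS br a b c (fun S => \sum_(s : 'S_(m.+1) | s ord0 != ord0) alpha s *:
      lcomm (brT br) c [seq yv a b (s i) | i <- enum 'I_(m.+1)] S).
  apply: FS_sum => s hs; have [u1 [u2 [h1 h2 ->]]] := split_s a b hs.
  apply: span_FS; apply: (span_sub (G := Gen br b c a (u1 ++ u2))).
    by move=> y; apply: Gen_perm h2.
  exact: Mlem.
have F2 : FS br a b c (fun S => \sum_(s : 'S_(m.+1) | s ord0 == ord0) alpha s *: D s S).
  apply: FS_sum => s _; apply: span_FS.
  apply: (span_sub (G := Gen br b c a (us s))).
    by move=> y; apply: Gen_perm (us_perm s).
  exact: Deriv.
exact: (FS_ext key (FS_add F1 F2)).
Qed.
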